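(* Every planar $3$-tree has track number at most $4000$.
   Context: A planar $3$-tree is a triangulated plane graph $G$ with $n\ge 3$ vertices such that either $n=3$ and $G$ is a $3$-cycle, or $n>3$ and $G$ has a vertex whose deletion yields a planar $3$-tree with $n-1$ vertices. A $t$-track assignment of a graph $G=(V,E)$ is a partition of $V$ into $t$ sets $V_1,\dots,V_t$, each an independent set of $G$, together with a total order $<_i$ on each $V_i$ (each $(V_i,<_i)$ is called a track). An X-crossing consists of two edges $(u,v)$ and $(x,y)$ with $u,x\in V_i$, $v,y\in V_j$ for some $i\neq j$, $u<_i x$ and $y<_j v$. A track layout is a track assignment with no X-crossing, and the track number of $G$ is the minimum $t$ such that $G$ has a $t$-track layout. *)

(* Defs.v *)
From mathcomp Require Import all_boot.
Set Implicit Arguments. Unset Strict Implicit. Unset Printing Implicit Defensive.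

(* A planar 3-tree is represented together with
   its face structure F (a list of triangular faces, with multiplicity):
   a plane 3-cycle has two faces (inner and outer), and the recursive
   deletion of a degree-3 vertex from a triangulation corresponds to
   inserting a vertex into a face and joining it to the three face
   vertices (stacking). *)

Definition tri_edge (a b c : nat) (u w : nat) : bool :=
  [|| (u == a) && (w == b), (u == b) && (w == a),
      (u == b) && (w == c), (u == c) && (w == b),
      (u == a) && (w == c) | (u == c) && (w == a)].

Definition add_vertex (E : nat -> nat -> bool) (v x y z : nat) (u w : nat) : bool :=
  [|| E u w, (u == v) && (w \in [:: x; y; z]) | (w == v) && (u \in [:: x; y; z])].

Inductive planar3tree : seq nat -> (nat -> nat -> bool) -> seq (nat * nat * nat) -> Prop :=
| P3T_base (a b c : nat) :
    a != b -> b != c -> a != c ->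
    planar3tree [:: a; b; c] (tri_edge a b c) [:: (a, b, c); (a, b, c)]
| P3T_step (V : seq nat) (E : nat -> nat -> bool) (F : seq (nat * nat * nat))
           (x y z v : nat) :
    planar3tree V E F -> (x, y, z) \in F -> v \notin V ->
    planar3tree (v :: V) (add_vertex E v x y z)
                ((x, y, v) :: (y, z, v) :: (x, z, v) :: rem (x, y, z) F).

Definition is_planar_3_tree (V : seq nat) (E : nat -> nat -> bool) : Prop :=
  exists F, planar3tree V E F.

Definition track_layout (V : seq nat) (E : nat -> nat -> bool) (t : nat)
  (track pos : nat -> nat) : Prop :=
  [/\ forall u, u \in V -> track u < t,
      forall u w, u \in V -> w \in V -> track u = track w -> pos u = pos w -> u = w,
      forall u w, u \in V -> w \in V -> E u w -> track u <> track w &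
      forall u v x y, u \in V -> v \in V -> x \in V -> y \in V ->
        E u v -> E x y -> track u = track x -> track v = track y ->
        track u <> track v -> ~ (pos u < pos x /\ pos y < pos v)].

Definition has_track_layout (V : seq nat) (E : nat -> nat -> bool) (t : nat) : Prop :=
  exists track pos, track_layout V E t track pos.

(* Main.v *)
Require Import Defs.
From mathcomp Require Import all_boot zify.
Set Implicit Arguments. Unset Strict Implicit. Unset Printing Implicit Defensive.


Fixpoint lexlt (s t : seq nat) : bool :=
  match s, t with
  | x :: s', y :: t' => (x < y) || ((x == y) && lexlt s' t')
  | _, _ => false
  end.

Lemma lexlt_irr s : lexlt s s = false.
Proof. by elim: s => //= x s ->; rewrite ltnn eqxx. Qed.

Lemma lexlt_trans s t u : lexlt s t -> lexlt t u -> lexlt s u.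
Proof.
elim: s t u => [|x s IH] [|y t] [|z u] //=.
case/orP=> [lxy|/andP[/eqP<- st]]; case/orP=> [lyz|/andP[/eqP<- tu]].
- by rewrite (ltn_trans lxy lyz).
- by rewrite lxy.
- by rewrite lyz.
- by rewrite eqxx (IH _ _ st tu) orbT.
Qed.

Lemma lexlt_total s t : size s = size t -> s != t -> lexlt s t || lexlt t s.
Proof.
elim: s t => [|x s IH] [|y t] //= [] Hs Hn.
case: (ltngtP x y) => //= Hxy; subst; rewrite ?orbT //.
apply: IH => //.
by apply: contraNneq Hn => ->.
Qed.

Lemma lexlt_cat p p' s s' : size p = size p' ->
  lexlt (p ++ s) (p' ++ s') = lexlt p p' || ((p == p') && lexlt s s').
Proof.
elim: p p' => [|x p IH] [|y p'] //= [] Hs.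
rewrite IH // eqseq_cons.
case: (ltngtP x y) => //= Hxy; subst; rewrite ?eqxx //=.
Qed.

Lemma count_lt (T : eqType) (p r : pred T) (s : seq T) (z : T) :
  (forall a, p a -> r a) -> z \in s -> r z -> ~~ p z -> count p s < count r s.
Proof.
move=> Hpr; elim: s => //= a s IH; rewrite in_cons => /orP[/eqP<-|zs] rz npz.
- rewrite rz (negbTE npz) /= add0n ltnS; exact: sub_count.
- have := IH zs rz npz; case: (p a) (Hpr a) => [->//|_]; case: (r a) => /=; lia.
Qed.

Definition samebag (lv ap sl : nat -> nat) u w :=
  [&& lv u == lv w, sl u == sl w & (lv u == 0) || (ap u == ap w)].
Definition shad (ap : nat -> nat) (q : nat -> nat -> bool) s v :=
  (s == ap v) || q (ap v) s.

Lemma mod3_contra a b c d : b = a.+1 -> d = c.+1 -> a %% 3 = d %% 3 -> b %% 3 = c %% 3 -> False.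
Proof. move=> -> ->; lia. Qed.
Lemma mod3_contra2 a b : b = a.+1 -> a %% 3 = b %% 3 -> False.
Proof. move=> ->; lia. Qed.

Lemma TT_bound a b c t : a < t -> b < t -> c < 3 -> (a * t + b) * 3 + c < 3 * t * t.
Proof. move=> H1 H2 H3.
have H4 : a.+1 * t <= t * t by rewrite leq_mul2r H1 orbT.
rewrite mulSn in H4.
have H5 : a * t + b < t * t by lia.
rewrite -mulnA; lia.
Qed.

Section GL.
Variables (V : seq nat) (R : nat -> nat -> bool) (t : nat)
  (lam ik lv ap sl : nat -> nat) (q : nat -> nat -> bool).
Hypothesis HL : track_layout V (fun u w => R u w && (lv u == lv w)) t lam ik.
Hypothesis Hsame : forall u w, u \in V -> w \in V -> R u w -> lv u = lv w -> samebag lv ap sl u w.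
Hypothesis Hdiff : forall u w, u \in V -> w \in V -> R u w -> lv u <> lv w ->
  (lv w = (lv u).+1 /\ shad ap q u w) \/ (lv u = (lv w).+1 /\ shad ap q w u).
Hypothesis Hap : forall v, v \in V -> 0 < lv v -> ap v \in V /\ (lv (ap v)).+1 = lv v.
Hypothesis Hq : forall a s, a \in V -> q a s -> s \in V /\ R a s /\ lv s = lv a.
Hypothesis Hq2 : forall a s s', a \in V -> q a s -> q a s' -> s = s' \/ R s s'.

Definition blk v := [:: sl v; lam v; ik v].
Fixpoint gkn n v := match n with 0 => blk v | n'.+1 => gkn n' (ap v) ++ blk v end.
Definition gk v := gkn (lv v) v.
Definition pre v := if lv v is n.+1 then gkn n (ap v) else [::].

Lemma size_gkn n v : size (gkn n v) = 3 * n.+1.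
Proof. elim: n v => [|n IH] v //=; rewrite size_cat IH /=; lia. Qed.

Lemma gkE v : gk v = pre v ++ blk v.
Proof. by rewrite /gk /pre; case: (lv v). Qed.

Lemma size_pre v : size (pre v) = 3 * lv v.
Proof. rewrite /pre; case: (lv v) => // n; rewrite size_gkn; lia. Qed.

Lemma preE v : v \in V -> 0 < lv v -> pre v = gk (ap v).
Proof.
move=> vV lv0; have [_ E1] := Hap vV lv0.
by rewrite /pre /gk; move: E1; case: (lv v) lv0 => // n _ [->].
Qed.

Lemma HLe u w : u \in V -> w \in V -> R u w -> lv u = lv w -> lam u <> lam w.
Proof. case: HL => _ _ H _ uV wV Ruw E; apply: (H u w uV wV); by rewrite Ruw E eqxx. Qed.

Lemma gk_inj u w : u \in V -> w \in V -> lv u = lv w -> gk u = gk w -> u = w.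
Proof.
move=> uV wV El; rewrite !gkE => /eqP; rewrite eqseq_cat; last by rewrite !size_pre El.
case/andP=> _ /eqP [] _ E1 E2; case: HL => _ H _ _; exact: H.
Qed.

Lemma lam_q a s : a \in V -> q a s -> lam s <> lam a.
Proof. move=> aV qas; have [sV [Ras Els]] := Hq aV qas; apply/nesym; exact: HLe. Qed.

Lemma lam_q2 a s s' : a \in V -> q a s -> q a s' -> lam s = lam s' -> s = s'.
Proof.
move=> aV qs qs' El; have [//|Rss] := Hq2 aV qs qs'.
have [sV [_ E1]] := Hq aV qs; have [s'V [_ E2]] := Hq aV qs'.
by case: (HLe sV s'V Rss (etrans E1 (esym E2))).
Qed.

Lemma LNC u w x y : u \in V -> w \in V -> x \in V -> y \in V -> R u w -> R x y ->
  lv u = lv w -> lv x = lv y -> lv u = lv x -> lam u = lam x -> lam w = lam y ->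
  ~~ (lexlt (gk u) (gk x) && lexlt (gk y) (gk w)).
Proof.
move=> uV wV xV yV Ruw Rxy Euw Exy Eux Lux Lwy.
have /and3P[_ /eqP Suw Auw] := Hsame uV wV Ruw Euw.
have /and3P[_ /eqP Sxy Axy] := Hsame xV yV Rxy Exy.
have Pw : pre w = pre u.
  rewrite /pre -Euw; case: (lv u) Auw => // n /=; by move/eqP->.
have Py : pre y = pre x.
  rewrite /pre -Exy; case: (lv x) Axy => // n /=; by move/eqP->.
rewrite !gkE Pw Py !lexlt_cat ?size_pre -?Eux //.
case: (boolP (lexlt (pre u) (pre x))) => [H1|_] /=.
  have H2: lexlt (pre x) (pre u) = false.
    by apply/negP=> H3; move: (lexlt_trans H1 H3); rewrite lexlt_irr.
  rewrite H2 /=; apply/negP=> /andP[/eqP E _]; by rewrite E lexlt_irr in H1.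
apply/negP => /andP[/andP[/eqP Ep Hb1] /orP[]]; first by rewrite Ep lexlt_irr.
case/andP=> _ Hb2; move: Hb1 Hb2; rewrite /blk /= -Suw -Sxy Lux Lwy !ltnn !eqxx /= !andbF !orbF.
case: (ltngtP (sl u) (sl x)) => //= _ Hik1 Hik2.
case: HL => _ _ _ H.
have R1 : R u w && (lv u == lv w) by rewrite Ruw Euw eqxx.
have R2 : R x y && (lv x == lv y) by rewrite Rxy Exy eqxx.
have N1 : lam u <> lam w by apply: HLe.
by apply: (H u w x y uV wV xV yV R1 R2 Lux Lwy N1).
Qed.

Lemma INC s v s' v' : s \in V -> v \in V -> s' \in V -> v' \in V ->
  lv v = (lv s).+1 -> lv v' = (lv s').+1 -> lv s = lv s' ->
  lam s = lam s' -> lam (ap v) = lam (ap v') -> shad ap q s v -> shad ap q s' v' ->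
  ~~ (lexlt (gk s) (gk s') && lexlt (gk v') (gk v)).
Proof.
move=> sV vV s'V v'V Ev Ev' Es Ls La Hs Hs'.
have p0 : 0 < lv v by rewrite Ev.
have p0' : 0 < lv v' by rewrite Ev'.
have [aV Ea] := Hap vV p0; have [a'V Ea'] := Hap v'V p0'.
have Ela : lv (ap v) = lv s by move: Ea; rewrite Ev => -[].
have Ela' : lv (ap v') = lv s' by move: Ea'; rewrite Ev' => -[].
rewrite (gkE v) (gkE v') (preE vV p0) (preE v'V p0') lexlt_cat; last first.
  by rewrite /gk !size_gkn Ela Ela' Es.
move: Hs Hs'; rewrite /shad.
move: (ap v) (ap v') aV a'V Ela Ela' La => a a' aV a'V Ela Ela' La Hs Hs'.
apply/negP => /andP[Hss /orP[Ha | /andP[/eqP Eaa _]]].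
- case/orP: Hs => [/eqP Esa | qs].
  + subst s; case/orP: Hs' => [/eqP Es'a' | qs'].
    * subst s'; by move: (lexlt_trans Ha Hss); rewrite lexlt_irr.
    * by apply: (lam_q a'V qs'); rewrite -Ls La.
  + case/orP: Hs' => [/eqP Es'a' | qs'].
    * subst s'; by apply: (lam_q aV qs); rewrite Ls La.
    * have [_ [Ra's' E1]] := Hq a'V qs'; have [_ [Ras E2]] := Hq aV qs.
      have sV1 : s \in V by case: (Hq aV qs).
      have s'V1 : s' \in V by case: (Hq a'V qs').
      have Heq : lv a' = lv a by rewrite Ela Ela' Es.
      have := LNC a'V s'V1 aV sV1 Ra's' Ras (esym E1) (esym E2) Heq (esym La) (esym Ls).
      by rewrite Ha Hss.
- have Eaa' : a' = a by apply: gk_inj => //; rewrite Ela Ela' Es.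
  subst a'.
  have Ess : s = s'.
    case/orP: Hs => [/eqP Esa | qs]; case/orP: Hs' => [/eqP Es'a | qs'].
    + by rewrite Esa Es'a.
    + by exfalso; apply: (lam_q aV qs'); rewrite -Ls Esa.
    + by exfalso; apply: (lam_q aV qs); rewrite Ls Es'a.
    + exact: (lam_q2 aV qs qs').
  by subst s'; rewrite lexlt_irr in Hss.
Qed.

Definition inh v := if lv v is 0 then 0 else lam (ap v).
Definition TT v := (inh v * t + lam v) * 3 + lv v %% 3.
Definition key v := lv v :: gk v.
Definition pos v := count (fun w => lexlt (key w) (key v)) V.

Lemma size_gk v : size (gk v) = 3 * (lv v).+1.
Proof. exact: size_gkn. Qed.

Lemma key_total u w : [|| lexlt (key u) (key w), lexlt (key w) (key u) | key u == key w].
Proof.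
rewrite /key /=; case: (ltngtP (lv u) (lv w)) => //= E.
rewrite eqseq_cons E eqxx /=.
case: (gk u =P gk w) => [->|Hn]; first by rewrite !orbT.
have Hn' : gk u != gk w by apply/eqP.
have Hs : size (gk u) = size (gk w) by rewrite !size_gk E.
by case/orP: (lexlt_total Hs Hn') => ->; rewrite ?orbT.
Qed.

Lemma pos_lt u w : u \in V -> lexlt (key u) (key w) -> pos u < pos w.
Proof.
move=> uV H; apply: (count_lt (z := u)) => //.
- move=> a Ha; exact: lexlt_trans Ha H.
- by rewrite lexlt_irr.
Qed.

Lemma pos_lt_inv u w : u \in V -> w \in V -> pos u < pos w -> lexlt (key u) (key w).
Proof.
move=> uV wV Hp; case/or3P: (key_total u w) => // H.
- by move: (pos_lt wV H); lia.
- by move: Hp; rewrite /pos (eqP H) ltnn.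
Qed.

Lemma pos_eq u w : u \in V -> w \in V -> pos u = pos w -> key u = key w.
Proof.
move=> uV wV Hp; case/or3P: (key_total u w) => [H|H|/eqP//].
- by move: (pos_lt uV H); lia.
- by move: (pos_lt wV H); lia.
Qed.

Lemma inh_lt v : v \in V -> inh v < t.
Proof.
move=> vV; case: HL => Ht _ _ _; rewrite /inh.
case E: (lv v) => [|n]; first by move: (Ht v vV); lia.
have p0 : 0 < lv v by rewrite E.
have [aV _] := Hap vV p0; exact: Ht.
Qed.

Lemma TT_dec u w : lam u < t -> lam w < t -> inh u < t -> inh w < t -> TT u = TT w ->
  [/\ lv u %% 3 = lv w %% 3, lam u = lam w & inh u = inh w].
Proof.
move=> l1 l2 i1 i2 E.
have E3 := congr1 (modn^~ 3) E; rewrite /TT /= !modnMDl !modn_mod in E3.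
have D3 := congr1 (divn^~ 3) E; rewrite /TT /= !divnMDl // !divn_small ?ltn_pmod // !addn0 in D3.
have Et := congr1 (modn^~ t) D3; rewrite /= !modnMDl !modn_small // in Et.
have Dt := congr1 (divn^~ t) D3; rewrite /= !divnMDl ?(leq_ltn_trans _ l1) // !divn_small // !addn0 in Dt.
by [].
Qed.

Lemma lexkey a b : lexlt (key a) (key b) -> lv a < lv b \/ (lv a = lv b /\ lexlt (gk a) (gk b)).
Proof. rewrite /key /=; case/orP=> [->|/andP[/eqP-> ->]]; by [left|right]. Qed.

Lemma inhE v : 0 < lv v -> inh v = lam (ap v).
Proof. by rewrite /inh; case: (lv v). Qed.

Lemma GL_layout : has_track_layout V R (3 * t * t).
Proof.
exists TT, pos; have HL' := HL; case: HL' => Ht Hinj He Hx; split.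
- move=> u uV; rewrite /TT; apply: TT_bound; [exact: inh_lt | exact: Ht | exact: ltn_pmod].
- move=> u w uV wV ET Ep; have := pos_eq uV wV Ep; rewrite /key => -[E1 E2].
  exact: gk_inj.
- move=> u w uV wV Ruw ET.
  have [E1 E2 E3] := TT_dec (Ht u uV) (Ht w wV) (inh_lt uV) (inh_lt wV) ET.
  case: (lv u =P lv w) => El; first exact: (HLe uV wV Ruw El E2).
  case: (Hdiff uV wV Ruw El) => [][E4 _]; lia.
- move=> u w x y uV wV xV yV Ruw Rxy Tux Twy Tuw [Hp1 Hp2].
  have [Mux Lux Iux] := TT_dec (Ht u uV) (Ht x xV) (inh_lt uV) (inh_lt xV) Tux.
  have [Mwy Lwy Iwy] := TT_dec (Ht w wV) (Ht y yV) (inh_lt wV) (inh_lt yV) Twy.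
  have K1 := lexkey (pos_lt_inv uV xV Hp1).
  have K2 := lexkey (pos_lt_inv yV wV Hp2).
  have Kc : forall d, lv w = lv u + d -> lv y = lv x + d -> lv u = lv x /\ lexlt (gk u) (gk x) /\ lexlt (gk y) (gk w).
    move=> d E1 E2; case: K1 => [K1|[K1 G1]].
      by exfalso; case: K2 => [K2|[K2 _]]; move: K1 K2; rewrite E1 E2; clear; lia.
    case: K2 => [K2|[K2 G2]]; last by [].
    by exfalso; move: K1 K2; rewrite E1 E2; clear; lia.
  case: (lv u =P lv w) => Euw.
  + case: (lv x =P lv y) => Exy; last first.
      case: (Hdiff xV yV Rxy Exy) => [][E4 _]; exfalso; move: Mux Mwy Euw E4; clear; lia.
    have [K3 [G1 G2]] := Kc 0 (etrans (esym Euw) (esym (addn0 _))) (etrans (esym Exy) (esym (addn0 _))).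
    have := LNC uV wV xV yV Ruw Rxy Euw Exy K3 Lux Lwy; by rewrite G1 G2.
  + case: (lv x =P lv y) => Exy.
      case: (Hdiff uV wV Ruw Euw) => [][E4 _]; exfalso; move: Mux Mwy Exy E4; clear; lia.
    case: (Hdiff uV wV Ruw Euw) => [][E4 S1]; case: (Hdiff xV yV Rxy Exy) => [][E5 S2].
    * have [K3 [G1 G2]] := Kc 1 (etrans E4 (esym (addn1 _))) (etrans E5 (esym (addn1 _))).
      have I1 : lam (ap w) = lam (ap y) by rewrite -!inhE ?E4 ?E5.
      have := INC uV wV xV yV E4 E5 K3 Lux I1 S1 S2; by rewrite G1 G2.
    * exfalso; move: Mux Mwy E4 E5; clear; lia.
    * exfalso; move: Mux Mwy E4 E5; clear; lia.
    * have Kd : lv u = lv x.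
        case: K1 => [K1|[K1 _]]; last by [].
        by exfalso; case: K2 => [K2|[K2 _]]; move: K1 K2; rewrite E4 E5; clear; lia.
      have [K3 [G1 G2]] : lv u = lv x /\ lexlt (gk u) (gk x) /\ lexlt (gk y) (gk w).
        case: K1 => [K1|[_ G1]]; first by move: K1; rewrite Kd ltnn.
        case: K2 => [K2|[_ G2]]; last by [].
        by move: K2 Kd; rewrite E4 E5; clear; lia.
      have I1 : lam (ap x) = lam (ap u) by rewrite -!inhE ?E4 ?E5.
      have Eyw : lv y = lv w by move: Kd; rewrite E4 E5; clear; lia.
      have := INC yV xV wV uV E5 E4 Eyw (esym Lwy) I1 S2 S1; by rewrite G1 G2.
Qed.
End GL.


Record data := Data { lv1 : nat -> nat; ap1 : nat -> nat; sl1 : nat -> nat;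
  bpar : nat -> seq nat; lv2 : nat -> nat; ap2 : nat -> nat; sl2 : nat -> nat;
  lv3 : nat -> nat; ap3 : nat -> nat }.

Definition cpar D a := [seq p <- bpar D a | lv2 D p == lv2 D a].
Definition q1 D a s := s \in bpar D a.
Definition q2 D a s := s \in cpar D a.

Record Inv (V : seq nat) (E : nat -> nat -> bool) (F : seq (nat * nat * nat)) (D : data) : Prop := {
 iES : forall u w, E u w -> u \in V /\ w \in V;
 iSym : forall u w, E u w -> E w u;
 iIrr : forall u, E u u = false;
 iF1 : forall x y z, (x, y, z) \in F -> [/\ x \in V, y \in V & z \in V] /\ [/\ E x y, E y z & E x z];
 iF3 : forall x y z, (x, y, z) \in F -> lv1 D x = lv1 D z -> lv1 D y = lv1 D z ->
        x \in bpar D z /\ y \in bpar D z;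
 iF4 : forall x y z, (x, y, z) \in F -> forall w p, w \in [:: x; y; z] -> p \in [:: x; y; z] ->
        lv1 D p = (lv1 D w).+1 -> shad (ap1 D) (q1 D) w p;
 iF5 : forall x y z, (x, y, z) \in F -> forall w s p, w \in [:: x; y; z] -> s \in [:: x; y; z] ->
        p \in [:: x; y; z] -> lv1 D s = (lv1 D w).+1 -> lv1 D p = lv1 D s ->
        lv2 D p = (lv2 D s).+1 -> shad (ap2 D) (q2 D) s p;
 iL1a : forall u w, u \in V -> w \in V -> E u w -> lv1 D u = lv1 D w ->
        samebag (lv1 D) (ap1 D) (sl1 D) u w;
 iL1b : forall u w, u \in V -> w \in V -> E u w -> lv1 D u <> lv1 D w ->
        (lv1 D w = (lv1 D u).+1 /\ shad (ap1 D) (q1 D) u w) \/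
        (lv1 D u = (lv1 D w).+1 /\ shad (ap1 D) (q1 D) w u);
 iL1c : forall v, v \in V -> 0 < lv1 D v -> ap1 D v \in V /\ (lv1 D (ap1 D v)).+1 = lv1 D v;
 iL1d : forall a s, a \in V -> s \in bpar D a -> [/\ s \in V, E a s & lv1 D s = lv1 D a];
 iL1e : forall a s s', a \in V -> s \in bpar D a -> s' \in bpar D a -> s = s' \/ E s s';
 iL2a : forall u w, u \in V -> w \in V -> E u w -> lv1 D u = lv1 D w -> lv2 D u = lv2 D w ->
        samebag (lv2 D) (ap2 D) (sl2 D) u w;
 iL2b : forall u w, u \in V -> w \in V -> E u w -> lv1 D u = lv1 D w -> lv2 D u <> lv2 D w ->
        (lv2 D w = (lv2 D u).+1 /\ shad (ap2 D) (q2 D) u w) \/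
        (lv2 D u = (lv2 D w).+1 /\ shad (ap2 D) (q2 D) w u);
 iL2c : forall v, v \in V -> 0 < lv2 D v -> ap2 D v \in V /\ (lv2 D (ap2 D v)).+1 = lv2 D v;
 iL3a : forall u w, u \in V -> w \in V -> E u w -> lv1 D u = lv1 D w -> lv2 D u = lv2 D w ->
        (lv3 D w = (lv3 D u).+1 /\ u = ap3 D w) \/ (lv3 D u = (lv3 D w).+1 /\ w = ap3 D u);
 iL3c : forall v, v \in V -> 0 < lv3 D v -> ap3 D v \in V /\ (lv3 D (ap3 D v)).+1 = lv3 D v;
 iL3d : forall v, v \in V -> cpar D v = (if lv3 D v == 0 then [::] else [:: ap3 D v])
}.

Lemma layout_weaken V E t t' tr ps : t <= t' -> track_layout V E t tr ps -> track_layout V E t' tr ps.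
Proof. move=> Ht [H1 H2 H3 H4]; split => // u uV; exact: leq_trans (H1 u uV) Ht. Qed.

Lemma inv_layout V E F D : Inv V E F D -> has_track_layout V E 4000.
Proof.
move=> HI.
pose R2 := fun u w => E u w && (lv1 D u == lv1 D w).
pose R3 := fun u w => R2 u w && (lv2 D u == lv2 D w).
have L3 : has_track_layout V R3 (3 * 1 * 1).
  apply: (@GL_layout V R3 1 (fun _ => 0) id (lv3 D) (ap3 D) id (fun _ _ => false)).
  - split => //.
    + move=> u w uV wV /andP[/andP[/andP[Euw /eqP E1] /eqP E2] /eqP E3].
      case: (iL3a HI uV wV Euw E1 E2) => [][]; rewrite E3 => /n_Sn [].
  - move=> u w uV wV /andP[/andP[Euw /eqP E1] /eqP E2] E3.
    by case: (iL3a HI uV wV Euw E1 E2) => [][]; rewrite E3 => /n_Sn [].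
  - move=> u w uV wV /andP[/andP[Euw /eqP E1] /eqP E2] E3.
    case: (iL3a HI uV wV Euw E1 E2) => [][E4 E5]; [left|right]; split => //;
      by rewrite /shad E5 eqxx.
  - exact: iL3c HI.
  - by [].
  - by [].
have [tr3 [ps3 L3']] := L3.
have L2 : has_track_layout V R2 (3 * 3 * 3).
  apply: (@GL_layout V R2 3 tr3 ps3 (lv2 D) (ap2 D) (sl2 D) (q2 D) L3').
  - move=> u w uV wV /andP[Euw /eqP E1] E2; exact (iL2a HI uV wV Euw E1 E2).
  - move=> u w uV wV /andP[Euw /eqP E1] E2; exact (iL2b HI uV wV Euw E1 E2).
  - exact: iL2c HI.
  - move=> a s aV; rewrite /q2 /cpar mem_filter => /andP[/eqP E1 Hb].
    have [sV Eas E2] := iL1d HI aV Hb; by rewrite /R2 Eas E2 eqxx.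
  - move=> a s s' aV; rewrite /q2 (iL3d HI aV); case: (lv3 D a == 0) => //.
    by rewrite !inE => /eqP-> /eqP->; left.
have [tr2 [ps2 L2']] := L2.
have L1 : has_track_layout V E (3 * 27 * 27).
  apply: (@GL_layout V E 27 tr2 ps2 (lv1 D) (ap1 D) (sl1 D) (q1 D) L2').
  - exact: iL1a HI.
  - exact: iL1b HI.
  - exact: iL1c HI.
  - move=> a s aV Hb; have [sV Eas E2] := iL1d HI aV Hb; by [].
  - exact: iL1e HI.
have [tr1 [ps1 L1']] := L1.
exists tr1, ps1; exact: layout_weaken L1'.
Qed.


Definition upd (A : Type) (f : nat -> A) (v : nat) (a : A) := fun u => if u == v then a else f u.
Lemma upd_new A (f : nat -> A) v a : upd f v a v = a.
Proof. by rewrite /upd eqxx. Qed.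
Lemma upd_old A (f : nat -> A) v a u : u != v -> upd f v a u = f u.
Proof. by rewrite /upd => /negbTE->. Qed.

Definition minl (f : nat -> nat) (s : seq nat) := foldr (fun a b => minn (f a) b) (f (head 0 s)) s.
Lemma minl_le f s a : a \in s -> minl f s <= f a.
Proof.
rewrite /minl; move: (f (head 0 s)) => d.
elim: s => //= b s IH; rewrite inE => /orP[/eqP->|/IH H]; first exact: geq_minl.
exact: leq_trans (geq_minr _ _) H.
Qed.
Lemma foldr_min_cases f d s : foldr (fun a b => minn (f a) b) d s = d \/
  exists2 a : nat, a \in s & f a = foldr (fun a b => minn (f a) b) d s.
Proof.
elim: s => [|c s IH] /=; first by left.
case: (leqP (f c) (foldr (fun a b => minn (f a) b) d s)) => H.
  by right; exists c; rewrite ?inE ?eqxx.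
case: IH => [E1|[a Ha E1]]; first by left; rewrite E1.
by right; exists a; rewrite ?inE ?Ha ?orbT.
Qed.

Lemma minl_mem f s : s != [::] -> exists2 a : nat, a \in s & f a = minl f s.
Proof.
case: s => // b s _; rewrite /minl /=.
case: (foldr_min_cases f (f b) (b :: s)) => /= [->|//].
by exists b; rewrite ?inE ?eqxx.
Qed.

Lemma samebag_sym lv ap sl u w : samebag lv ap sl u w = samebag lv ap sl w u.
Proof.
rewrite /samebag; case: (lv u =P lv w) => [E|]; last by case: (lv w =P lv u) => // /esym.
by rewrite E !eqxx [sl u == _]eq_sym [ap u == _]eq_sym.
Qed.

Section Step.
Variables (V : seq nat) (E : nat -> nat -> bool) (F : seq (nat * nat * nat)) (D : data)
  (x y z v : nat).
Hypothesis HI : Inv V E F D.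
Hypothesis Hf : (x, y, z) \in F.
Hypothesis Hv : v \notin V.

Definition N := [:: x; y; z].
Definition m := minn (lv1 D x) (minn (lv1 D y) (lv1 D z)).
Definition P1 := [seq w <- N | lv1 D w == m.+1].
Definition m2 := minl (lv2 D) P1.
Definition l2v := if P1 is [::] then 0 else m2.+1.
Definition C := [seq w <- P1 | lv2 D w == l2v].
Definition apexC := match P1 with [:: s] => s | [:: s; p] => if lv3 D p < lv3 D s then s else p | _ => v end.
Definition D' := Data
 (upd (lv1 D) v m.+1)
 (upd (ap1 D) v (if P1 is p :: _ then ap1 D p else z))
 (upd (sl1 D) v (if P1 is p :: _ then sl1 D p else v))
 (upd (bpar D) v P1)
 (upd (lv2 D) v l2v)
 (upd (ap2 D) v (if C is c :: _ then ap2 D c else apexC))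
 (upd (sl2 D) v (if C is c :: _ then sl2 D c else v))
 (upd (lv3 D) v (if C is c :: _ then (lv3 D c).+1 else 0))
 (upd (ap3 D) v (if C is c :: _ then c else v)).
Definition E' := add_vertex E v x y z.

Lemma neqv u : u \in V -> u != v.
Proof. by move=> uV; apply: contraNneq Hv => <-. Qed.

Lemma face_facts : [/\ x \in V, y \in V & z \in V] /\ [/\ E x y, E y z & E x z].
Proof. exact (iF1 HI Hf). Qed.

Lemma NV w : w \in N -> w \in V.
Proof. have [[xV yV zV] _] := face_facts; by rewrite !inE => /or3P[]/eqP->. Qed.

Lemma Nadj a b : a \in N -> b \in N -> a = b \/ E a b.
Proof.
have [_ [Exy Eyz Exz]] := face_facts; have S := iSym HI.
rewrite !inE => /or3P[]/eqP-> /or3P[]/eqP->; by [left|right; auto].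
Qed.

Lemma Nuniq : uniq N.
Proof.
have [_ [Exy Eyz Exz]] := face_facts; have Irr := iIrr HI.
have nxy : x != y by apply/eqP => Heq; move: Exy; rewrite Heq Irr.
have nyz : y != z by apply/eqP => Heq; move: Eyz; rewrite Heq Irr.
have nxz : x != z by apply/eqP => Heq; move: Exz; rewrite Heq Irr.
by rewrite /N /= !inE (negbTE nxy) (negbTE nxz) nyz.
Qed.

Lemma samebag_refl lv ap sl u : samebag lv ap sl u u.
Proof. by rewrite /samebag !eqxx orbT. Qed.

Lemma m_le w : w \in N -> m <= lv1 D w.
Proof. rewrite /m !inE => /or3P[]/eqP->; lia. Qed.

Lemma exlow : exists2 w0, w0 \in N & lv1 D w0 = m.
Proof.
rewrite /m; case: (leqP (lv1 D x) (minn (lv1 D y) (lv1 D z))) => H.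
  by exists x; rewrite ?inE ?eqxx.
case: (leqP (lv1 D y) (lv1 D z)) => H2.
  by exists y; rewrite ?inE ?eqxx ?orbT.
by exists z; rewrite ?inE ?eqxx ?orbT.
Qed.

Lemma lv1N w : w \in N -> lv1 D w = m \/ lv1 D w = m.+1.
Proof.
move=> wN; have [w0 w0N E0] := exlow; have Hm := m_le wN.
case: (Nadj wN w0N) => [->|Eww0]; first by left.
case: (lv1 D w =P lv1 D w0) => Hl; first by left; rewrite Hl.
case: (iL1b HI (NV wN) (NV w0N) Eww0 Hl) => [][Hl2 _]; lia.
Qed.

Lemma P1P p : (p \in P1) = (p \in N) && (lv1 D p == m.+1).
Proof. by rewrite /P1 mem_filter andbC. Qed.

Lemma notP1 w : w \in N -> w \notin P1 -> lv1 D w = m.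
Proof. move=> wN; rewrite P1P wN /=; case: (lv1N wN) => ->; by rewrite ?eqxx. Qed.

Lemma P1N p : p \in P1 -> p \in N.
Proof. by rewrite P1P => /andP[]. Qed.

Lemma P1lv p : p \in P1 -> lv1 D p = m.+1.
Proof. by rewrite P1P => /andP[_ /eqP]. Qed.

Lemma P1V p : p \in P1 -> p \in V.
Proof. by move/P1N/NV. Qed.

Lemma P1adj p p' : p \in P1 -> p' \in P1 -> p = p' \/ E p p'.
Proof. move=> /P1N pN /P1N p'N; exact: Nadj. Qed.

Lemma P1same p p' : p \in P1 -> p' \in P1 -> samebag (lv1 D) (ap1 D) (sl1 D) p p'.
Proof.
move=> pP p'P; case: (P1adj pP p'P) => [->|Ep]; first exact: samebag_refl.
apply (iL1a HI (P1V pP) (P1V p'P) Ep); by rewrite !P1lv.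
Qed.

Lemma P1lv2 p p' : p \in P1 -> p' \in P1 -> lv2 D p <= (lv2 D p').+1.
Proof.
move=> pP p'P; case: (P1adj pP p'P) => [->|Ep]; first by [].
case: (lv2 D p =P lv2 D p') => [->//|Hn].
have El : lv1 D p = lv1 D p' by rewrite !P1lv.
case: (iL2b HI (P1V pP) (P1V p'P) Ep El Hn) => [][H _]; lia.
Qed.

Lemma P1nil w : P1 = [::] -> w \in N -> lv1 D w = m.
Proof. move=> H wN; apply: notP1 => //; by rewrite H. Qed.

Lemma m2_le p : p \in P1 -> m2 <= lv2 D p.
Proof. exact: minl_le. Qed.

Lemma m2_ex : P1 != [::] -> exists2 p0, p0 \in P1 & lv2 D p0 = m2.
Proof. exact: minl_mem. Qed.

Lemma lv2P1 p : p \in P1 -> lv2 D p = m2 \/ lv2 D p = m2.+1.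
Proof.
move=> pP; have ne : P1 != [::] by apply/eqP => H; rewrite H in pP.
have [p0 p0P E0] := m2_ex ne; have := P1lv2 pP p0P; have := m2_le pP; lia.
Qed.

Lemma P1cons : P1 != [::] -> l2v = m2.+1.
Proof. by rewrite /l2v; case: P1. Qed.

Lemma CP c : (c \in C) = (c \in P1) && (lv2 D c == m2.+1).
Proof.
rewrite /C mem_filter andbC; case E1: (c \in P1) => //=.
by rewrite P1cons //; apply/eqP => H; rewrite H in E1.
Qed.

Lemma NP1_uniq : uniq P1.
Proof. exact: filter_uniq Nuniq. Qed.

Lemma C_uniq : uniq C.
Proof. exact: filter_uniq NP1_uniq. Qed.

Lemma C1 : C = [::] \/ exists c, C = [:: c].
Proof.
case HC: C => [|c [|c' r]]; [by left|by right; exists c|exfalso].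
have cC : c \in C by rewrite HC inE eqxx.
have c'C : c' \in C by rewrite HC !inE eqxx orbT.
have ncc' : c != c' by move: C_uniq; rewrite HC /= inE negb_or => /andP[/andP[]].
move: cC c'C; rewrite !CP => /andP[cP /eqP lc] /andP[c'P /eqP lc'].
have ne : P1 != [::] by apply/eqP => H; rewrite H in cP.
have [p0 p0P E0] := m2_ex ne.
have [w0 w0N Ew0] := exlow.
have d1 : forall p, p \in P1 -> (w0 == p) = false.
  move=> p pP; apply/eqP => Heq; move: (P1lv pP); rewrite -Heq Ew0; lia.
have d2 : (p0 == c) = false by apply/eqP => Heq; move: lc; rewrite -Heq E0; lia.
have d3 : (p0 == c') = false by apply/eqP => Heq; move: lc'; rewrite -Heq E0; lia.
have Hu : uniq [:: w0; p0; c; c'].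
  by rewrite /= !inE !negb_or (d1 _ p0P) (d1 _ cP) (d1 _ c'P) d2 d3 ncc'.
have Hs : {subset [:: w0; p0; c; c'] <= N}.
  move=> a; rewrite !in_cons in_nil orbF => /or4P[]/eqP->; [exact: w0N|exact: P1N p0P|exact: P1N cP|exact: P1N c'P].
by move: (uniq_leq_size Hu Hs).
Qed.

Lemma sizeP1 : size P1 <= 2.
Proof.
have [w0 w0N Ew0] := exlow.
have Hn : w0 \notin P1 by apply/negP; rewrite P1P Ew0 => /andP[_ /eqP]; lia.
have Hs : {subset w0 :: P1 <= N} by move=> a; rewrite in_cons => /orP[/eqP->//|/P1N].
have Hu : uniq (w0 :: P1) by rewrite /= Hn NP1_uniq.
by move: (uniq_leq_size Hu Hs).
Qed.

Lemma E'_old u w : u \in V -> w \in V -> E' u w = E u w.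
Proof. move=> uV wV; by rewrite /E' /add_vertex (negbTE (neqv uV)) (negbTE (neqv wV)) /= !orbF. Qed.

Lemma Ev_false w : E v w = false.
Proof. apply/negP => /(iES HI) [vV _]; by move: Hv; rewrite vV. Qed.
Lemma Ev_false' w : E w v = false.
Proof. apply/negP => /(iES HI) [_ vV]; by move: Hv; rewrite vV. Qed.

Lemma E'_vw w : w \in V -> E' v w = (w \in N).
Proof. move=> wV; rewrite /E' /add_vertex Ev_false eqxx (negbTE (neqv wV)) /=. by case: (w \in N). Qed.
Lemma E'_wv w : w \in V -> E' w v = (w \in N).
Proof. move=> wV; rewrite /E' /add_vertex Ev_false' eqxx (negbTE (neqv wV)) /=. by case: (w \in N). Qed.
Lemma E'_vv : E' v v = false.
Proof.
rewrite /E' /add_vertex Ev_false eqxx /=; apply/negP => /orP[] H; move: (NV H); by rewrite (negbTE Hv).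
Qed.
Lemma E'_ext u w : E u w -> E' u w.
Proof. by rewrite /E' /add_vertex => ->. Qed.

Section Old.
Variable u : nat.
Hypothesis uV : u \in V.
Lemma lv1o : lv1 D' u = lv1 D u. Proof. exact: upd_old (neqv uV). Qed.
Lemma ap1o : ap1 D' u = ap1 D u. Proof. exact: upd_old (neqv uV). Qed.
Lemma sl1o : sl1 D' u = sl1 D u. Proof. exact: upd_old (neqv uV). Qed.
Lemma bparo : bpar D' u = bpar D u. Proof. exact: upd_old (neqv uV). Qed.
Lemma lv2o : lv2 D' u = lv2 D u. Proof. exact: upd_old (neqv uV). Qed.
Lemma ap2o : ap2 D' u = ap2 D u. Proof. exact: upd_old (neqv uV). Qed.
Lemma sl2o : sl2 D' u = sl2 D u. Proof. exact: upd_old (neqv uV). Qed.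
Lemma lv3o : lv3 D' u = lv3 D u. Proof. exact: upd_old (neqv uV). Qed.
Lemma ap3o : ap3 D' u = ap3 D u. Proof. exact: upd_old (neqv uV). Qed.
Lemma cparo : cpar D' u = cpar D u.
Proof.
rewrite /cpar bparo; apply: eq_in_filter => p pb.
have [pV _ _] := iL1d HI uV pb; by rewrite /= !upd_old ?neqv.
Qed.
End Old.

Lemma lv1n : lv1 D' v = m.+1. Proof. exact: upd_new. Qed.
Lemma ap1n : ap1 D' v = (if P1 is p :: _ then ap1 D p else z). Proof. exact: upd_new. Qed.
Lemma sl1n : sl1 D' v = (if P1 is p :: _ then sl1 D p else v). Proof. exact: upd_new. Qed.
Lemma bparn : bpar D' v = P1. Proof. exact: upd_new. Qed.
Lemma lv2n : lv2 D' v = l2v. Proof. exact: upd_new. Qed.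
Lemma ap2n : ap2 D' v = (if C is c :: _ then ap2 D c else apexC). Proof. exact: upd_new. Qed.
Lemma sl2n : sl2 D' v = (if C is c :: _ then sl2 D c else v). Proof. exact: upd_new. Qed.
Lemma lv3n : lv3 D' v = (if C is c :: _ then (lv3 D c).+1 else 0). Proof. exact: upd_new. Qed.
Lemma ap3n : ap3 D' v = (if C is c :: _ then c else v). Proof. exact: upd_new. Qed.
Lemma cparn : cpar D' v = C.
Proof.
rewrite /cpar bparn lv2n /C; apply: eq_in_filter => p pP; by rewrite lv2o ?P1V.
Qed.

Lemma shad1o s w : w \in V -> 0 < lv1 D w -> shad (ap1 D') (q1 D') s w = shad (ap1 D) (q1 D) s w.
Proof.
move=> wV H; have [aV _] := iL1c HI wV H; by rewrite /shad /q1 ap1o // bparo.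
Qed.
Lemma shad2o s w : w \in V -> 0 < lv2 D w -> shad (ap2 D') (q2 D') s w = shad (ap2 D) (q2 D) s w.
Proof.
move=> wV H; have [aV _] := iL2c HI wV H; by rewrite /shad /q2 ap2o // cparo.
Qed.
Lemma sb1o u w : u \in V -> w \in V ->
  samebag (lv1 D') (ap1 D') (sl1 D') u w = samebag (lv1 D) (ap1 D) (sl1 D) u w.
Proof. move=> uV wV; by rewrite /samebag !lv1o ?ap1o ?sl1o. Qed.
Lemma sb2o u w : u \in V -> w \in V ->
  samebag (lv2 D') (ap2 D') (sl2 D') u w = samebag (lv2 D) (ap2 D) (sl2 D) u w.
Proof. move=> uV wV; by rewrite /samebag !lv2o ?ap2o ?sl2o. Qed.

Lemma P1ne p : p \in P1 -> P1 != [::].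
Proof. by move=> pP; apply/eqP => H; rewrite H in pP. Qed.

Lemma NL1a w : w \in N -> lv1 D w = m.+1 -> samebag (lv1 D') (ap1 D') (sl1 D') v w.
Proof.
move=> wN Hw; have wP : w \in P1 by rewrite P1P wN Hw eqxx.
have wV := NV wN.
rewrite /samebag lv1n ap1n sl1n lv1o // ap1o // sl1o // Hw eqxx /=.
case HP: P1 wP => [//|p r] wP; have pP : p \in P1 by rewrite HP inE eqxx.
rewrite -HP in wP pP.
have /and3P[_ /eqP-> /orP[|/eqP->]] := P1same pP wP; last by rewrite !eqxx.
by rewrite P1lv.
Qed.

Lemma NL1b w : w \in N -> lv1 D w = m -> shad (ap1 D') (q1 D') w v.
Proof.
move=> wN Hw; have [[xV yV zV] _] := face_facts.
rewrite /shad /q1 ap1n; case HP: P1 => [|p r].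
- have [xb yb] : x \in bpar D z /\ y \in bpar D z.
    apply (iF3 HI Hf); rewrite !(P1nil HP) //; by rewrite !inE eqxx ?orbT.
  rewrite bparo //; move: wN; rewrite !inE => /or3P[]/eqP->; by rewrite ?eqxx ?xb ?yb ?orbT.
- have pP : p \in P1 by rewrite HP inE eqxx.
  have Hl : lv1 D p = (lv1 D w).+1 by rewrite (P1lv pP) Hw.
  have H := iF4 HI Hf wN (P1N pP) Hl.
  rewrite -(shad1o _ (P1V pP)) in H; last by rewrite (P1lv pP).
  by move: H; rewrite /shad /q1 ap1o ?P1V.
Qed.

Lemma NL1c : ap1 D' v \in v :: V /\ (lv1 D' (ap1 D' v)).+1 = lv1 D' v.
Proof.
have [[xV yV zV] _] := face_facts.
rewrite ap1n lv1n; case HP: P1 => [|p r].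
- rewrite inE zV orbT lv1o // (P1nil HP) //; by rewrite !inE eqxx ?orbT.
- have pP : p \in P1 by rewrite HP inE eqxx.
  have p0 : 0 < lv1 D p by rewrite (P1lv pP).
  have [aV Ea] := iL1c HI (P1V pP) p0.
  by rewrite inE aV orbT lv1o // Ea (P1lv pP).
Qed.

Lemma C_P1 c : c \in C -> c \in P1.
Proof. by rewrite CP => /andP[]. Qed.

Lemma NL2a p : p \in P1 -> lv2 D p = l2v -> samebag (lv2 D') (ap2 D') (sl2 D') v p.
Proof.
move=> pP Hp; have pC : p \in C by rewrite /C mem_filter Hp eqxx pP.
have pV := P1V pP.
rewrite /samebag lv2n ap2n sl2n lv2o // ap2o // sl2o // Hp eqxx /=.
case: C1 pC => [->//|[c HC]]; rewrite HC inE => /eqP->; by rewrite !eqxx orbT.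
Qed.

Lemma C_nil_lv p : C = [::] -> p \in P1 -> lv2 D p = m2.
Proof.
move=> HC pP; case: (lv2P1 pP) => // H.
have : p \in C by rewrite CP pP H eqxx.
by rewrite HC.
Qed.

Lemma apexC_P1 : P1 != [::] -> apexC \in P1.
Proof.
rewrite /apexC; have := sizeP1; case: P1 => [|s [|p' [|? ?]]] //= _ _.
- by rewrite inE eqxx.
- by case: ifP; rewrite !inE eqxx ?orbT.
Qed.

Lemma apexC_spec : C = [::] -> forall p, p \in P1 -> p = apexC \/ p \in cpar D apexC.
Proof.
move=> HC p pP; have := sizeP1; rewrite /apexC.
case HP: P1 pP => [|s [|p' [|r rr]]] //=.
- by rewrite inE => /eqP->; left.
- move=> pP _.
  have sP : s \in P1 by rewrite HP !inE eqxx.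
  have p'P : p' \in P1 by rewrite HP !inE eqxx orbT.
  have ns : s != p' by move: NP1_uniq; rewrite HP /= inE andbT.
  have [Es|Esp] := P1adj sP p'P; first by rewrite Es eqxx in ns.
  have El1 : lv1 D s = lv1 D p' by rewrite !P1lv.
  have El2 : lv2 D s = lv2 D p' by rewrite !(C_nil_lv HC).
  have sV := P1V sP; have p'V := P1V p'P.
  case: (iL3a HI sV p'V Esp El1 El2) => [][E3 E4].
  + have -> : (lv3 D p' < lv3 D s) = false by rewrite E3; lia.
    move: pP; rewrite !inE => /orP[]/eqP->; [right|by left].
    rewrite (iL3d HI p'V) E3 /= E4 inE; by [].
  + have -> : (lv3 D p' < lv3 D s) = true by rewrite E3; lia.
    move: pP; rewrite !inE => /orP[]/eqP->; [by left|right].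
    rewrite (iL3d HI sV) E3 /= E4 inE; by [].
Qed.

Lemma NL2b p : p \in P1 -> lv2 D p <> l2v -> lv2 D p = m2 /\ shad (ap2 D') (q2 D') p v.
Proof.
move=> pP Hp.
have Hm : lv2 D p = m2.
  by case: (lv2P1 pP) => // H; exfalso; apply: Hp; rewrite P1cons ?(P1ne pP).
split=> //; rewrite /shad /q2 ap2n.
case: C1 => [HC|[c HC]]; rewrite HC.
- have apV := P1V (apexC_P1 (P1ne pP)).
  rewrite cparo //; by case: (apexC_spec HC pP) => [->|->]; rewrite ?eqxx ?orbT.
- have cP : c \in P1 by apply: C_P1; rewrite HC inE eqxx.
  have cV := P1V cP.
  have cC : c \in C by rewrite HC inE eqxx.
  have lc : lv2 D c = m2.+1 by move: cC; rewrite CP => /andP[_ /eqP].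
  have [w0 w0N Ew0] := exlow.
  have H1 : lv1 D p = (lv1 D w0).+1 by rewrite (P1lv pP) Ew0.
  have H2 : lv1 D c = lv1 D p by rewrite (P1lv pP) (P1lv cP).
  have H3 : lv2 D c = (lv2 D p).+1 by rewrite lc Hm.
  have H := iF5 HI Hf w0N (P1N pP) (P1N cP) H1 H2 H3.
  rewrite -(shad2o _ cV) in H; last by rewrite lc.
  by move: H; rewrite /shad /q2 ap2o.
Qed.

Lemma NL2c : 0 < lv2 D' v -> ap2 D' v \in v :: V /\ (lv2 D' (ap2 D' v)).+1 = lv2 D' v.
Proof.
rewrite lv2n ap2n => Hl.
have ne : P1 != [::] by move: Hl; rewrite /l2v; case: P1.
case: C1 => [HC|[c HC]]; rewrite HC.
- have aP := apexC_P1 ne; have aV := P1V aP.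
  by rewrite inE aV orbT lv2o // (C_nil_lv HC aP) P1cons.
- have cC : c \in C by rewrite HC inE eqxx.
  have cP := C_P1 cC; have cV := P1V cP.
  have lc : lv2 D c = m2.+1 by move: cC; rewrite CP => /andP[_ /eqP].
  have c0 : 0 < lv2 D c by rewrite lc.
  have [aV Ea] := iL2c HI cV c0.
  by rewrite inE aV orbT lv2o // Ea lc P1cons.
Qed.

Lemma NL3a p : p \in P1 -> lv2 D p = l2v -> lv3 D' v = (lv3 D p).+1 /\ p = ap3 D' v.
Proof.
move=> pP Hp; have pC : p \in C by rewrite /C mem_filter Hp eqxx pP.
rewrite lv3n ap3n; case: C1 pC => [->//|[c HC]]; rewrite HC inE => /eqP->; by [].
Qed.

Lemma NL3c : 0 < lv3 D' v -> ap3 D' v \in v :: V /\ (lv3 D' (ap3 D' v)).+1 = lv3 D' v.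
Proof.
rewrite lv3n ap3n; case HC: C => [//|c r] _.
have cC : c \in C by rewrite HC inE eqxx.
have cV := P1V (C_P1 cC).
by rewrite inE cV orbT lv3o.
Qed.

Lemma NL3d : cpar D' v = (if lv3 D' v == 0 then [::] else [:: ap3 D' v]).
Proof. rewrite cparn lv3n ap3n; by case: C1 => [->|[c ->]]. Qed.

Lemma inVN u : (u \in v :: N) = (u == v) || (u \in N).
Proof. exact: in_cons. Qed.

Lemma lv1N' w : w \in N -> lv1 D' w = lv1 D w.
Proof. by move=> wN; rewrite lv1o // NV. Qed.

Lemma GF4 w p : w \in v :: N -> p \in v :: N -> lv1 D' p = (lv1 D' w).+1 ->
  shad (ap1 D') (q1 D') w p.
Proof.
rewrite !inVN => /orP[/eqP->|wN] /orP[/eqP->|pN]; rewrite ?lv1n ?lv1N' //.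
- by lia.
- by case: (lv1N pN); lia.
- by move=> H; apply: NL1b => //; case: (lv1N wN); lia.
- move=> H; have := iF4 HI Hf wN pN H.
  by rewrite -(shad1o _ (NV pN)) // H.
Qed.

Lemma GF5 w s p : w \in v :: N -> s \in v :: N -> p \in v :: N ->
  lv1 D' s = (lv1 D' w).+1 -> lv1 D' p = lv1 D' s -> lv2 D' p = (lv2 D' s).+1 ->
  shad (ap2 D') (q2 D') s p.
Proof.
rewrite !inVN => Hw Hs Hp H1 H2 H3.
case/orP: Hw => [/eqP Ew|wN].
  rewrite Ew lv1n in H1; case/orP: Hs H1 => [/eqP->|sN]; rewrite ?lv1n ?lv1N' //; first by lia.
  by case: (lv1N sN); lia.
case/orP: Hs H1 H2 H3 => [/eqP->|sN]; case/orP: Hp => [/eqP->|pN];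
  rewrite ?lv1n ?lv2n ?lv1N' //.
- by lia.
- move=> Hw Hp; rewrite lv2o ?NV // => Hl.
  have pP : p \in P1 by rewrite P1P pN Hp eqxx.
  case: (lv2P1 pP); rewrite Hl P1cons ?(P1ne pP); lia.
- move=> _ Hs; rewrite lv2o ?NV // => Hl.
  have sP : s \in P1 by rewrite P1P sN -Hs eqxx.
  have Hn : lv2 D s <> l2v by rewrite Hl; lia.
  by case: (NL2b sP Hn).
- move=> H1 H2; rewrite !lv2o ?NV // => H3.
  have := iF5 HI Hf wN sN pN H1 H2 H3.
  by rewrite -(shad2o _ (NV pN)) // H3.
Qed.

Definition F' := (x, y, v) :: (y, z, v) :: (x, z, v) :: rem (x, y, z) F.

Lemma inV' u : (u \in v :: V) = (u == v) || (u \in V).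
Proof. exact: in_cons. Qed.

Lemma newfaces a b c : (a, b, c) \in F' -> (a, b, c) \in F \/
  [/\ a \in N, b \in N, c = v & E a b].
Proof.
have [_ [Exy Eyz Exz]] := face_facts.
rewrite /F' !in_cons => /or4P[].
- move/eqP => -[-> -> ->]; right; by split; rewrite /N ?inE ?eqxx ?orbT.
- move/eqP => -[-> -> ->]; right; by split; rewrite /N ?inE ?eqxx ?orbT.
- move/eqP => -[-> -> ->]; right; by split; rewrite /N ?inE ?eqxx ?orbT.
- by move/mem_rem; left.
Qed.

Lemma subvN a b : a \in N -> b \in N -> {subset [:: a; b; v] <= v :: N}.
Proof.
move=> aN bN u Hu; rewrite in_cons.
have : [|| u == a, u == b | u == v].
  by move: Hu; rewrite !in_cons in_nil orbF.
by case/or3P=> /eqP->; rewrite ?eqxx ?aN ?bN ?orbT.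
Qed.

Lemma inv_step_main : Inv (v :: V) E' F' D'.
Proof.
have Sy := iSym HI.
split.
- move=> u w; rewrite /E' /add_vertex => /or3P[/(iES HI)[uV wV]|/andP[/eqP-> wN]|/andP[/eqP-> uN]].
  + by rewrite !in_cons uV wV !orbT.
  + by rewrite !in_cons (NV wN) eqxx !orbT.
  + by rewrite !in_cons (NV uN) eqxx !orbT.
- move=> u w; rewrite /E' /add_vertex => /or3P[/Sy->//|H|H]; by rewrite H ?orbT.
- move=> u; rewrite /E' /add_vertex (iIrr HI) /=.
  case: (u =P v) => [->|_] //=; apply/negP => /orP[] /NV; by rewrite (negbTE Hv).
- move=> a b c /newfaces [Hold|[aN bN -> Eab]].
  + have [[aV bV cV] [E1 E2 E3]] := iF1 HI Hold.
    by split; [split; rewrite in_cons ?aV ?bV ?cV orbT| split; apply: E'_ext].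
  + have aV := NV aN; have bV := NV bN.
    split; first by split; rewrite in_cons ?aV ?bV ?eqxx ?orbT.
    by split; rewrite ?E'_wv ?aN ?bN //; apply: E'_ext.
- move=> a b c /newfaces [Hold|[aN bN -> Eab]].
  + have [[aV bV cV] _] := iF1 HI Hold.
    rewrite !lv1o // => H1 H2; rewrite bparo //; exact: (iF3 HI Hold H1 H2).
  + rewrite lv1n !lv1N' // => Ha Hb; by rewrite bparn !P1P aN bN Ha Hb eqxx.
- move=> a b c /newfaces [Hold|[aN bN -> Eab]] w p Hw Hp.
  + have [[aV bV cV] _] := iF1 HI Hold.
    have M : forall u, u \in [:: a; b; c] -> u \in V.
      by move=> u; rewrite !in_cons in_nil orbF => /or3P[]/eqP->.
    rewrite !lv1o ?M // => H; have H' := iF4 HI Hold Hw Hp H.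
    by rewrite shad1o ?M // H.
  + exact: GF4 (subvN aN bN Hw) (subvN aN bN Hp).
- move=> a b c /newfaces [Hold|[aN bN -> Eab]] w s0 p Hw Hs Hp.
  + have [[aV bV cV] _] := iF1 HI Hold.
    have M : forall u, u \in [:: a; b; c] -> u \in V.
      by move=> u; rewrite !in_cons in_nil orbF => /or3P[]/eqP->.
    rewrite !lv1o ?M // !lv2o ?M // => H1 H2 H3; have H' := iF5 HI Hold Hw Hs Hp H1 H2 H3.
    by rewrite shad2o ?M // H3.
  + exact: GF5 (subvN aN bN Hw) (subvN aN bN Hs) (subvN aN bN Hp).
- move=> u w; rewrite !in_cons => /orP[/eqP->|uV] /orP[/eqP->|wV] Euw El.
  + exact: samebag_refl.
  + rewrite E'_vw // in Euw; rewrite lv1n lv1o // in El; exact: NL1a.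
  + rewrite E'_wv // in Euw; rewrite lv1n lv1o // in El; rewrite samebag_sym; exact: NL1a.
  + rewrite E'_old // in Euw; rewrite !lv1o // in El; rewrite sb1o //; exact: (iL1a HI uV wV Euw El).
- move=> u w; rewrite !in_cons => /orP[/eqP->|uV] /orP[/eqP->|wV] Euw El //.
  + rewrite E'_vw // in Euw; rewrite lv1n lv1o // in El *.
    have Hw : lv1 D w = m by case: (lv1N Euw) => // H; rewrite H in El.
    by right; split; [rewrite Hw | exact: NL1b].
  + rewrite E'_wv // in Euw; rewrite lv1n lv1o // in El *.
    have Hw : lv1 D u = m by case: (lv1N Euw) => // H; rewrite H in El.
    by left; split; [rewrite Hw | exact: NL1b].
  + rewrite E'_old // in Euw; rewrite !lv1o // in El *.
    case: (iL1b HI uV wV Euw El) => [][H1 H2]; [left|right]; split => //;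
    rewrite shad1o // H1 //.
- move=> u; rewrite in_cons => /orP[/eqP->|uV]; first by move=> _; exact: NL1c.
  rewrite lv1o // ap1o // => H; have [aV Ea] := iL1c HI uV H.
  by rewrite in_cons aV orbT lv1o.
- move=> a s0; rewrite in_cons => /orP[/eqP->|aV].
  + rewrite bparn => sP; have sV := P1V sP.
    by rewrite in_cons sV orbT E'_vw ?(P1N sP) // lv1n lv1o ?(P1lv sP).
  + rewrite bparo // => Hs; have [sV Eas El] := iL1d HI aV Hs.
    by rewrite in_cons sV orbT E'_old // !lv1o.
- move=> a s0 s1; rewrite in_cons => /orP[/eqP->|aV].
  + rewrite !bparn => H1 H2; case: (P1adj H1 H2) => [->|H]; [by left|right; exact: E'_ext].
  + rewrite !bparo // => H1 H2; case: (iL1e HI aV H1 H2) => [->|H]; [by left|right; exact: E'_ext].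
- move=> u w; rewrite !in_cons => /orP[/eqP->|uV] /orP[/eqP->|wV] Euw El1 El2.
  + exact: samebag_refl.
  + rewrite E'_vw // in Euw; rewrite lv1n lv1o // in El1; rewrite lv2n lv2o // in El2.
    apply: NL2a => //; by rewrite P1P Euw El1 eqxx.
  + rewrite E'_wv // in Euw; rewrite lv1n lv1o // in El1; rewrite lv2n lv2o // in El2.
    rewrite samebag_sym; apply: NL2a => //; by rewrite P1P Euw -El1 eqxx.
  + rewrite E'_old // in Euw; rewrite !lv1o // in El1; rewrite !lv2o // in El2.
    rewrite sb2o //; exact: (iL2a HI uV wV Euw El1 El2).
- move=> u w; rewrite !in_cons => /orP[/eqP->|uV] /orP[/eqP->|wV] Euw El1 El2 //.
  + rewrite E'_vw // in Euw; rewrite lv1n lv1o // in El1; rewrite lv2n lv2o // in El2 *.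
    have wP : w \in P1 by rewrite P1P Euw El1 eqxx.
    have [H1 H2] := NL2b wP (nesym El2).
    by right; split => //; rewrite H1 P1cons ?(P1ne wP).
  + rewrite E'_wv // in Euw; rewrite lv1n lv1o // in El1; rewrite lv2n lv2o // in El2 *.
    have uP : u \in P1 by rewrite P1P Euw -El1 eqxx.
    have [H1 H2] := NL2b uP El2.
    by left; split => //; rewrite H1 P1cons ?(P1ne uP).
  + rewrite E'_old // in Euw; rewrite !lv1o // in El1; rewrite !lv2o // in El2 *.
    case: (iL2b HI uV wV Euw El1 El2) => [][H1 H2]; [left|right]; split => //;
    rewrite shad2o // H1 //.
- move=> u; rewrite in_cons => /orP[/eqP->|uV]; first exact: NL2c.
  rewrite lv2o // ap2o // => H; have [aV Ea] := iL2c HI uV H.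
  by rewrite in_cons aV orbT lv2o.
- move=> u w; rewrite !in_cons => /orP[/eqP->|uV] /orP[/eqP->|wV] Euw El1 El2.
  + by rewrite E'_vv in Euw.
  + rewrite E'_vw // in Euw; rewrite lv1n lv1o // in El1; rewrite lv2n lv2o // in El2.
    have wP : w \in P1 by rewrite P1P Euw El1 eqxx.
    have [H1 H2] := NL3a wP (esym El2).
    by right; rewrite (lv3o wV); split.
  + rewrite E'_wv // in Euw; rewrite lv1n lv1o // in El1; rewrite lv2n lv2o // in El2.
    have uP : u \in P1 by rewrite P1P Euw -El1 eqxx.
    have [H1 H2] := NL3a uP El2.
    by left; rewrite (lv3o uV); split.
  + rewrite E'_old // in Euw; rewrite !lv1o // in El1; rewrite !lv2o // in El2.
    by rewrite !lv3o // !ap3o //; exact: (iL3a HI uV wV Euw El1 El2).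
- move=> u; rewrite in_cons => /orP[/eqP->|uV]; first exact: NL3c.
  rewrite lv3o // ap3o // => H; have [aV Ea] := iL3c HI uV H.
  by rewrite in_cons aV orbT lv3o.
- move=> u; rewrite in_cons => /orP[/eqP->|uV]; first exact: NL3d.
  rewrite cparo // lv3o // ap3o //; exact: (iL3d HI uV).
Qed.
End Step.


Lemma tri_edgeE a b c u w : a != b -> b != c -> a != c ->
  tri_edge a b c u w = [&& u \in [:: a; b; c], w \in [:: a; b; c] & u != w].
Proof.
move=> ab bc ac.
have ba : (b == a) = false by rewrite eq_sym (negbTE ab).
have cb : (c == b) = false by rewrite eq_sym (negbTE bc).
have ca : (c == a) = false by rewrite eq_sym (negbTE ac).
have ab' := negbTE ab; have bc' := negbTE bc; have ac' := negbTE ac.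
apply/idP/idP.
- rewrite /tri_edge; case/orP => [H|/orP[H|/orP[H|/orP[H|/orP[H|H]]]]]; case/andP: H => /eqP-> /eqP->;
  by rewrite !inE !eqxx ?orbT //= ?ab ?bc ?ac ?ba ?cb ?ca.
- rewrite !inE => /and3P[/or3P[]/eqP-> /or3P[]/eqP-> Hn]; move: Hn;
  rewrite /tri_edge ?eqxx ?ab' ?bc' ?ac' ?ba ?cb ?ca //=.
Qed.

Lemma inv_base a b c : a != b -> b != c -> a != c ->
  exists D, Inv [:: a; b; c] (tri_edge a b c) [:: (a, b, c); (a, b, c)] D.
Proof.
move=> ab bc ac.
have ba : (b == a) = false by rewrite eq_sym (negbTE ab).
have cb : (c == b) = false by rewrite eq_sym (negbTE bc).
have ca : (c == a) = false by rewrite eq_sym (negbTE ac).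
have ab' := negbTE ab; have bc' := negbTE bc; have ac' := negbTE ac.
pose D := Data (fun _ => 0) (fun _ => 0) (fun _ => 0)
  (fun u => if u == b then [:: a] else if u == c then [:: a; b] else [::])
  (fun u => if u == a then 0 else 1) (fun _ => a) (fun u => if u == a then a else b)
  (fun u => if u == c then 1 else 0) (fun _ => b).
exists D.
have TE := tri_edgeE _ _ ab bc ac.
have Vc : forall P : nat -> Prop, P a -> P b -> P c -> forall u, u \in [:: a; b; c] -> P u.
  by move=> P Pa Pb Pc u; rewrite !inE => /or3P[/eqP->|/eqP->|/eqP->].
have Fc : forall x y z, (x, y, z) \in [:: (a, b, c); (a, b, c)] -> [/\ x = a, y = b & z = c].
  by move=> x y z; rewrite !inE => /orP[] /eqP[-> -> ->].
split.
- by move=> u w; rewrite TE => /and3P[].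
- by move=> u w; rewrite !TE eq_sym => /and3P[-> -> ->].
- by move=> u; rewrite TE eqxx /= !andbF.
- move=> x y z /Fc[-> -> ->]; rewrite !TE !inE !eqxx ?orbT /=; split => //.
- move=> x y z /Fc[-> -> ->] _ _; by rewrite /= !eqxx ?cb ?ca ?inE ?eqxx ?orbT.
- by move=> x y z _ w p _ _ /=.
- by move=> x y z _ w s p _ _ _ /=.
- by move=> u w _ _ _ _; rewrite /samebag /= ?eqxx.
- by [].
- by [].
- move=> u s; rewrite !inE => /or3P[]/eqP->; rewrite /= ?eqxx ?ba ?ca ?cb ?ab' ?ac' ?bc' //.
  + rewrite inE => /eqP->; by rewrite TE !inE !eqxx ?orbT /= ?ba.
  + rewrite !inE => /orP[]/eqP->; by rewrite TE !inE !eqxx ?orbT /= ?ca ?cb.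
- move=> u s s'; rewrite !inE => /or3P[]/eqP->; rewrite /= ?eqxx ?ba ?ca ?cb ?ab' ?ac' ?bc' //.
  + by rewrite !inE => /eqP-> /eqP->; left.
  + rewrite !inE => /orP[]/eqP-> /orP[]/eqP->; try by left.
    * by right; rewrite TE !inE !eqxx ?orbT /= ?ab.
    * by right; rewrite TE !inE !eqxx ?orbT /= ?ba.
- move=> u w uV wV _ _; rewrite /samebag /= => E2.
  by case: (u == a) E2; case: (w == a) => //= _; rewrite !eqxx.
- move=> u w uV wV Euw _ /=.
  case: (eqVneq u a) => [->|ua]; case: (eqVneq w a) => [->|wa]; rewrite ?eqxx ?(negbTE ua) ?(negbTE wa) //= => _.
  + by left; rewrite /shad eqxx.
  + by right; rewrite /shad eqxx.
- move=> v vV /=; case: (v == a) => //= _; by rewrite !inE eqxx.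
- move=> u w; rewrite !inE => /or3P[]/eqP-> /or3P[]/eqP->;
  rewrite /= ?TE ?inE ?eqxx ?orbT /= ?ab' ?ba ?ac' ?ca ?bc' ?cb //=;
  try (move=> _ _; by [left|right]).
- move=> v; rewrite !inE => /or3P[]/eqP->; rewrite /= ?eqxx ?ab' ?ba ?ac' ?ca ?bc' ?cb //.
- move=> v; rewrite !inE => /or3P[]/eqP->; rewrite /cpar /= ?eqxx ?ab' ?ba ?ac' ?ca ?bc' ?cb /= ?eqxx ?ab' ?ba ?ac' ?ca ?bc' ?cb //=.
Qed.


Lemma inv_planar V E F : planar3tree V E F -> exists D, Inv V E F D.
Proof.
elim => [a b c ab bc ac | V0 E0 F0 x y z v _ [D HI] Hf Hv].
- exact: inv_base.
- by exists (D' D x y z v); apply: inv_step_main.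
Qed.

Theorem mainTheorem3 (V : seq nat) (E : nat -> nat -> bool) :
  is_planar_3_tree V E -> has_track_layout V E 4000.
Proof.
move=> [F H]; have [D HI] := inv_planar H; exact: inv_layout HI.
Qed.
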